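(* Let $V$ be a finite vocabulary. Each word $x\in V$ has a synonym set $S_x\subseteq V$ with $x\in S_x$, the synonym relation being symmetric, and a nonempty perturbation set $P_x\subseteq V$; assume $|P_x|=|P_{x'}|$ for every word $x$ and every $x'\in S_x$. Write $n_x=|P_x|$ and $n_{x,x'}=|P_x\cap P_{x'}|$. Fix $L\ge1$ and $0\le R\le L$. For $X=x_1,\ldots,x_L\in V^L$ let $S_X=\{X'\in V^L: \sum_i\mathbb{I}\{x'_i\ne x_i\}\le R,\ x'_i\in S_{x_i}\ \forall i\}$ and $\Pi_X(Z)=\prod_{i=1}^L\mathbb{I}\{z_i\in P_{x_i}\}/|P_{x_i}|$. For each word $x$ let $\tilde x^*\in\arg\min_{x'\in S_x}n_{x,x'}/n_x$. Given $X=x_1,\ldots,x_L$, order its positions as $\ell_1,\ldots,\ell_L$ so that $n_{x_{\ell_i},\tilde x^*_{\ell_i}}/n_{x_{\ell_i}}\le n_{x_{\ell_j},\tilde x^*_{\ell_j}}/n_{x_{\ell_j}}$ whenever $i\le j$ (here $\tilde x^*_k$ denotes $\widetilde{(x_k)}^*$), and define $X^*=x^*_1,\ldots,x^*_L$ by $x^*_i=\tilde x^*_i$ if $i\in\{\ell_1,\ldots,\ell_R\}$ and $x^*_i=x_i$ otherwise. Then for every $\lambda\ge0$, $$\max_{X'\in S_X}\sum_{Z\in V^L}\big(\lambda\Pi_X(Z)-\Pi_{X'}(Z)\big)_+=\sum_{Z\in V^L}\big(\lambda\Pi_X(Z)-\Pi_{X^*}(Z)\big)_+,$$ where $(s)_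+=\max(s,0)$.
   Context: $X^*\in S_X$ since it differs from $X$ in at most $R$ positions, each by a synonym. *)

(* Defs.v *)
From HB Require Import structures.
From mathcomp Require Import all_boot all_order all_algebra all_fingroup.
Set Implicit Arguments. Unset Strict Implicit. Unset Printing Implicit Defensive.
Import Order.TTheory GRing.Theory Num.Theory.
Local Open Scope ring_scope.

Section Defs.
Variables (F : realFieldType) (V : finType) (L : nat).

Definition overlap_ratio (P : V -> {set V}) (x x' : V) : F :=
  #|P x :&: P x'|%:R / #|P x|%:R.

Definition SX (S : V -> {set V}) (R : nat) (X : {ffun 'I_L -> V}) :
    pred {ffun 'I_L -> V} :=
  fun X' => (#|[set i | X' i != X i]| <= R)%N && [forall i, X' i \in S (X i)].

Definition PiX (P : V -> {set V}) (X Z : {ffun 'I_L -> V}) : F :=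
  \prod_(i < L) ((Z i \in P (X i))%:R / #|P (X i)|%:R).

Definition pos_part (s : F) : F := Num.max s 0.

Definition hinge_value (P : V -> {set V}) (lam : F) (X X' : {ffun 'I_L -> V}) : F :=
  \sum_(Z : {ffun 'I_L -> V}) pos_part (lam * PiX P X Z - PiX P X' Z).

(* X^*: replace positions l_1..l_R (ell j for j < R) by xt *)
Definition Xstar (xt : V -> V) (R : nat) (ell : {perm 'I_L})
    (X : {ffun 'I_L -> V}) : {ffun 'I_L -> V} :=
  [ffun i => if ((ell^-1)%g i < R)%N then xt (X i) else X i].

End Defs.

(* Main.v *)
Require Import Defs.
From HB Require Import structures.
From mathcomp Require Import all_boot all_order all_algebra all_fingroup.
From mathcomp Require Import ring lra.
Import Order.TTheory GRing.Theory Num.Theory.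
Local Open Scope ring_scope.

Lemma card_lt (L R : nat) : (#|[set j : 'I_L | (j < R)%N]| <= R)%N.
Proof.
rewrite cardE -(size_map val) -[X in (_ <= X)%N](size_iota 0).
apply: uniq_leq_size; first by rewrite map_inj_uniq ?enum_uniq //; exact: val_inj.
by move=> x /mapP [j]; rewrite mem_enum inE mem_iota /= => jR ->.
Qed.

Lemma r_refl (F : realFieldType) (V : finType) (P : V -> {set V})
  (HPne : forall x, P x != set0) x : overlap_ratio F P x x = 1.
Proof.
rewrite /overlap_ratio setIid divff // pnatr_eq0 -lt0n card_gt0; exact: HPne.
Qed.

Lemma r01 (F : realFieldType) (V : finType) (P : V -> {set V})
  (HPne : forall x, P x != set0) x y :
  0 <= overlap_ratio F P x y <= 1.
Proof.
rewrite /overlap_ratio divr_ge0 ?ler0n //=.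
have n0 : 0 < #|P x|%:R :> F by rewrite ltr0n card_gt0.
rewrite ler_pdivrMr // mul1r ler_nat; apply: subset_leq_card; exact: subsetIl.
Qed.
Lemma prod_sorted (F : realFieldType) (L : nat) (f : 'I_L -> F)
  (f0 : forall j, 0 <= f j) (fmono : forall i j : 'I_L, (i <= j)%N -> f i <= f j) :
  forall n (T : {set 'I_L}), (forall j, j \in T -> (j < n)%N) ->
  (#|T| <= n)%N /\ \prod_(j : 'I_L | (j < #|T|)%N) f j <= \prod_(j in T) f j.
Proof.
elim=> [|n IH] T HT.
  have -> : T = set0 by apply/setP=> j; rewrite inE; case: (boolP (j \in T)) => // /HT.
  rewrite cards0 big_set0 big_pred0 //.
case: (boolP [exists k in T, val k == n]) => [/existsP [k /andP [kT /eqP kn]] | Hn].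
  have HT0 : forall j, j \in T :\ k -> (j < n)%N.
    move=> j; rewrite !inE => /andP [jk jT].
    have := HT j jT; rewrite ltnS leq_eqVlt => /orP [/eqP jn|//].
    by exfalso; move/eqP: jk; apply; apply: val_inj; rewrite /= jn kn.
  have [c0 IH0] := IH _ HT0.
  have Tc : #|T| = (#|T :\ k|).+1 by rewrite (cardsD1 k) kT.
  split; first by rewrite Tc ltnS.
  have mL : (#|T :\ k| < L)%N by apply: leq_ltn_trans c0 _; rewrite -kn ltn_ord.
  rewrite Tc (bigD1 (Ordinal mL)) //= (bigD1 k kT) /=.
  apply: ler_pM.
  - exact: f0.
  - by apply: prodr_ge0 => j _; exact: f0.
  - by apply: fmono; rewrite /= kn.
  rewrite (eq_bigl (fun j : 'I_L => (j < #|T :\ k|)%N)); last first.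
    move=> j /=; rewrite ltnS leq_eqVlt.
    case: (boolP (j == Ordinal mL)) => [/eqP ->|jm]; first by rewrite eqxx ltnn.
    rewrite andbT; case: (boolP (val j == #|T :\ k|)) => //= /eqP jv.
    by move/eqP: jm; case; apply: val_inj.
  rewrite [X in _ <= X](eq_bigl (fun j => j \in T :\ k)); first exact: IH0.
  by move=> j; rewrite !inE andbC.
have HT' : forall j, j \in T -> (j < n)%N.
  move=> j jT; have := HT j jT; rewrite ltnS leq_eqVlt => /orP [/eqP jn|//].
  by move: Hn; rewrite negb_exists => /forallP /(_ j); rewrite jT /= jn eqxx.
have [c IH1] := IH _ HT'; split=> //; exact: leqW.
Qed.
Lemma prod_bool (F : realFieldType) (L : nat) (b : 'I_L -> bool) :
  \prod_i ((b i)%:R : F) = ([forall i, b i])%:R.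
Proof.
case: (boolP [forall i, b i]) => [/forallP H | /forallP H].
  by rewrite big1 // => i _; rewrite H.
have [i Hi] : exists i, ~~ b i.
  by apply/existsP; rewrite -negb_forall; apply/negP => /forallP.
by rewrite (bigD1 i) //= (negbTE Hi) mul0r.
Qed.

Lemma sum_ind (F : realFieldType) (V : finType) (A : {set V}) (c : F) :
  \sum_v ((v \in A)%:R * c) = #|A|%:R * c.
Proof.
rewrite [RHS]mulr_natl -sumr_const big_mkcond /=.
rewrite [RHS]big_mkcond. by apply: eq_bigr => v _; case: (v \in A); rewrite ?mul1r ?mul0r.
Qed.

Lemma hinge_formula (F : realFieldType) (V : finType) (P : V -> {set V})
  (L : nat) (lam : F) (Hlam : 0 <= lam) (X X' : {ffun 'I_L -> V})
  (HPne : forall x, P x != set0)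
  (Hc : forall i, #|P (X' i)| = #|P (X i)|) :
  hinge_value P lam X X' =
  lam - Num.min lam 1 * \prod_i overlap_ratio F P (X i) (X' i).
Proof.
pose c : F := \prod_i (#|P (X i)|%:R)^-1.
have c0 : 0 < c.
  apply: prodr_gt0 => i _; rewrite invr_gt0 ltr0n card_gt0; exact: HPne.
have pw : forall Z : {ffun 'I_L -> V},
  pos_part (lam * PiX F P X Z - PiX F P X' Z) =
  lam * PiX F P X Z - Num.min lam 1 *
    \prod_i ((Z i \in P (X i) :&: P (X' i))%:R / #|P (X i)|%:R).
  move=> Z.
  rewrite /PiX.
  have -> : \prod_(i < L) ((Z i \in P (X' i))%:R / #|P (X' i)|%:R) =
     \prod_i ((Z i \in P (X' i))%:R / #|P (X i)|%:R) :> F.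
    by apply: eq_bigr => i _; rewrite Hc.
  rewrite !big_split /= !prod_bool -/c.
  have -> : [forall i, Z i \in P (X i) :&: P (X' i)] =
     [forall i, Z i \in P (X i)] && [forall i, Z i \in P (X' i)].
    apply/forallP/andP => [H|[/forallP H1 /forallP H2] i].
      by split; apply/forallP=> i; have := H i; rewrite inE => /andP[].
    by rewrite inE H1 H2.
  rewrite /pos_part.
  case: [forall i, _]; case: [forall i, _] => /=;
    rewrite ?mul1r ?mul0r ?mulr0 ?subr0 ?sub0r ?subrr.
  - have H : lam * c - c = (lam - 1) * c by ring.
    rewrite H; case: (lerP lam 1) => Hl.
      by rewrite subrr max_r // pmulr_lle0 // subr_le0.
    by rewrite max_l ?mul1r // pmulr_lge0 // subr_ge0 ltW.
  - by rewrite max_l // mulr_ge0 // ltW.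
  - by rewrite max_r // oppr_le0 ltW.
  - by rewrite max_r.
rewrite /hinge_value (eq_bigr _ (fun Z _ => pw Z)).
rewrite sumrB -!mulr_sumr /PiX.
have D : forall g : 'I_L -> V -> F,
    \sum_(Z : {ffun 'I_L -> V}) \prod_i g i (Z i) = \prod_i \sum_v g i v.
  by move=> g; rewrite bigA_distr_bigA.
rewrite (D (fun i v => (v \in P (X i))%:R / #|P (X i)|%:R)).
rewrite (D (fun i v => (v \in P (X i) :&: P (X' i))%:R / #|P (X i)|%:R)).
rewrite big1 ?mulr1; last first.
  move=> i _; rewrite sum_ind divff // pnatr_eq0 -lt0n card_gt0; exact: HPne.
congr (_ - _ * _); apply: eq_bigr => i _.
by rewrite sum_ind.
Qed.

Theorem lemma3 (F : realFieldType) (V : finType)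
  (S P : V -> {set V})
  (HSrefl : forall x, x \in S x)
  (HSsym : forall x x', x' \in S x -> x \in S x')
  (HPne : forall x, P x != set0)
  (HPcard : forall x x', x' \in S x -> #|P x| = #|P x'|)
  (L R : nat) (HL : (1 <= L)%N) (HR : (R <= L)%N)
  (xt : V -> V)
  (Hxt_in : forall x, xt x \in S x)
  (Hxt_min : forall x x', x' \in S x ->
     overlap_ratio F P x (xt x) <= overlap_ratio F P x x')
  (X : {ffun 'I_L -> V}) (ell : {perm 'I_L})
  (Hell : forall i j : 'I_L, (i <= j)%N ->
     overlap_ratio F P (X (ell i)) (xt (X (ell i)))
       <= overlap_ratio F P (X (ell j)) (xt (X (ell j))))
  (lam : F) (Hlam : 0 <= lam) :
  Xstar xt R ell X \in SX S R X /\
  (forall X', X' \in SX S R X ->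
     hinge_value P lam X X' <= hinge_value P lam X (Xstar xt R ell X)).
Proof.
have HXs : Xstar xt R ell X \in SX S R X.
  apply/andP; split.
    apply: leq_trans (subset_leq_card (B := [set i | ((ell^-1)%g i < R)%N]) _) _.
      apply/subsetP => i; rewrite !inE ffunE; case: ifP => //; by rewrite eqxx.
    have -> : [set i | ((ell^-1)%g i < R)%N] = (ell^-1)%g @^-1: [set j : 'I_L | (j < R)%N].
      by apply/setP => i; rewrite !inE.
    rewrite card_preimset; [exact: card_lt | exact: perm_inj].
  apply/forallP => i; rewrite ffunE; case: ifP => _; [exact: Hxt_in | exact: HSrefl].
split=> // X' /andP [Hcard /forallP HS].
rewrite !hinge_formula //; first last.
  by move=> i; rewrite (HPcard _ _ (HS i)).
  move=> i; rewrite /Xstar ffunE; case: ifP => _ //; by rewrite -(HPcard _ _ (Hxt_in (X i))).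
rewrite lerD2l lerN2; apply: ler_wpM2l; first by rewrite le_min Hlam ler01.
pose f j := overlap_ratio F P (X (ell j)) (xt (X (ell j))).
have f0 : forall j, 0 <= f j by move=> j; have /andP[] := @r01 F V P HPne (X (ell j)) (xt (X (ell j))).
have f1 : forall j, f j <= 1 by move=> j; have /andP[] := @r01 F V P HPne (X (ell j)) (xt (X (ell j))).
rewrite [X in X <= _](reindex_inj (@perm_inj _ ell)) [X in _ <= X](reindex_inj (@perm_inj _ ell)) /=.
pose T := [set j | X' (ell j) != X (ell j)].
have HT : (#|T| <= R)%N.
  apply: leq_trans Hcard.
  have -> : T = ell @^-1: [set i | X' i != X i] by apply/setP => j; rewrite !inE.
  by rewrite card_preimset //; exact: perm_inj.
rewrite (_ : \prod_(j < L) overlap_ratio F P (X (ell j)) (Xstar xt R ell X (ell j))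
   = \prod_(j < L | (j < R)%N) f j); last first.
  rewrite [RHS]big_mkcond /=; apply: eq_bigr => j _.
  rewrite /Xstar ffunE permK /f; case: ifP => // _; exact: r_refl.
apply: (le_trans (_ : _ <= \prod_(j < L | (j < #|T|)%N) f j)).
  rewrite [X in X <= _]big_mkcond [X in _ <= X]big_mkcond /=.
  apply: ler_prod => j _; case: ifP => jR; case: ifP => jT; rewrite ?lexx ?f0 ?f1 ?ler01 //=.
  by move: jR; rewrite (leq_trans jT HT).
have H3 : \prod_(j < L | (j < #|T|)%N) f j <= \prod_(j in T) f j.
  by have [] := @prod_sorted F L f f0 Hell L T (fun j _ => ltn_ord j).
apply: (le_trans H3).
rewrite big_mkcond /=; apply: ler_prod => j _.
rewrite inE; case: ifP => Hj; rewrite ?f0 /=.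
  by apply: Hxt_min; exact: HS.
move/negbFE/eqP: Hj => ->; by rewrite r_refl // ler01 lexx.
Qed.
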